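(* Let $R$ be a tolerance relation on $\{1,\ldots,n\}$ and $T(b)=\sum_{(i,j)\in R}E_{ii}bE_{jj}$ for $b\in M_n(\mathbb{C})$. If $\rho\in M_n(\mathbb{C})$ is a density matrix, $v\in\mathbb{C}^n$ is an $R$-tolerant unit vector, and $T(\rho)=T(P_v)$, then $\rho=P_v$.
   Context: A tolerance relation is a reflexive and symmetric relation; its graph has an edge between $i\neq j$ whenever $(i,j)\in R$. $E_{ij}$ are the matrix units, so $T$ sets to zero all entries in positions $(i,j)\notin R$. A density matrix is a positive semidefinite matrix with trace $1$. For a unit vector $v$, $P_v=(v_i\overline{v_j})_{i,j}$. For non-zero $v$, $R_v:=\{(i,j)\in R:v_iv_j\ne0\}$, a tolerance relation on $\{i:v_i\ne0\}$; $v$ is $R$-tolerant if the graph of $R_v$ is connected. *)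

(* Defs.v *)
From HB Require Import structures.
From mathcomp Require Import all_boot all_order all_algebra.
From mathcomp Require Import complex.
From mathcomp Require Import reals.
Set Implicit Arguments. Unset Strict Implicit. Unset Printing Implicit Defensive.
Import Order.TTheory GRing.Theory Num.Theory.
Local Open Scope ring_scope.
Local Open Scope complex_scope.

Definition tolerance (n : nat) (R : rel 'I_n) : Prop :=
  reflexive R /\ symmetric R.

Definition E {C : nzRingType} {n : nat} (i j : 'I_n) : 'M[C]_n := delta_mx i j.

Definition Tmap {C : nzRingType} {n : nat} (R : rel 'I_n) (b : 'M[C]_n) : 'M[C]_n :=
  \sum_(i < n) \sum_(j < n | R i j) (E i i *m b *m E j j).

Definition adjmx {C : numClosedFieldType} {m n : nat} (A : 'M[C]_(m, n)) : 'M[C]_(n, m) :=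
  (map_mx Num.conj A)^T.

Definition psd {C : numClosedFieldType} {n : nat} (A : 'M[C]_n) : Prop :=
  adjmx A = A /\ forall x : 'cV[C]_n, 0 <= (adjmx x *m A *m x) 0 0.

Definition density {C : numClosedFieldType} {n : nat} (A : 'M[C]_n) : Prop :=
  psd A /\ \tr A = 1.

Definition unit_vec {C : numClosedFieldType} {n : nat} (v : 'cV[C]_n) : Prop :=
  \sum_(i < n) `|v i 0| ^+ 2 = 1.

Definition Pv {C : numClosedFieldType} {n : nat} (v : 'cV[C]_n) : 'M[C]_n :=
  \matrix_(i, j) (v i 0 * Num.conj (v j 0)).

Definition Rv {C : numClosedFieldType} {n : nat} (R : rel 'I_n) (v : 'cV[C]_n) : rel 'I_n :=
  [rel i j | [&& R i j, v i 0 != 0 & v j 0 != 0]].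

Definition tolerant {C : numClosedFieldType} {n : nat} (R : rel 'I_n) (v : 'cV[C]_n) : Prop :=
  v != 0 /\ forall i j : 'I_n, v i 0 != 0 -> v j 0 != 0 -> connect (Rv R v) i j.

(* Main.v *)
Require Import Defs.
From HB Require Import structures.
From mathcomp Require Import all_boot all_order all_algebra.
From mathcomp Require Import complex.
From mathcomp Require Import reals.
From mathcomp Require Import ring.
Import Order.TTheory GRing.Theory Num.Theory.
Local Open Scope ring_scope.

Section S.
Variable C : numClosedFieldType.

Lemma adjmxM m n p (A : 'M[C]_(m,n)) (B : 'M[C]_(n,p)) : adjmx (A *m B) = adjmx B *m adjmx A.
Proof. by rewrite /adjmx map_mxM trmx_mul. Qed.
Lemma adjmxD m n (A B : 'M[C]_(m,n)) : adjmx (A + B) = adjmx A + adjmx B.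
Proof. by rewrite /adjmx map_mxD linearD. Qed.
Lemma adjmxZ m n a (A : 'M[C]_(m,n)) : adjmx (a *: A) = a^* *: adjmx A.
Proof. by rewrite /adjmx map_mxZ linearZ. Qed.

Lemma psd_null n (A : 'M[C]_n) (x : 'cV[C]_n) : psd A -> (adjmx x *m A *m x) 0 0 = 0 -> A *m x = 0.
Proof.
move=> [hA pA] q0.
set y := A *m x.
have Qx : adjmx x *m A *m x = 0 by apply/matrixP => i j; rewrite !ord1 q0 mxE.
have sE : (adjmx y *m y) 0 0 = \sum_k (y k 0)^* * y k 0.
  by rewrite mxE; apply: eq_bigr => k _; rewrite !mxE.
set a := (adjmx y *m A *m y) 0 0.
set s := (adjmx y *m y) 0 0.
have a0 : 0 <= a by apply: pA.
have s0 : 0 <= s.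
  rewrite /s sE; apply: sumr_ge0 => k _; rewrite mulrC; exact: mul_conjC_ge0.
set al := - (a + 1).
have cal : al^* = al.
  by rewrite /al rmorphN rmorphD rmorph1; congr (- (_ + _)); exact: geC0_conj a0.
have e1 : adjmx x *m A *m y = adjmx y *m y by rewrite /y adjmxM hA mulmxA.
have e2 : adjmx y *m A *m x = adjmx y *m y by rewrite -mulmxA.
have key : (adjmx (al *: x + s *: y) *m A *m (al *: x + s *: y)) =
   ((al * s + al * s) *: (adjmx y *m y) + (s * s) *: (adjmx y *m A *m y)).
  rewrite adjmxD !adjmxZ cal geC0_conj // !mulmxDl !mulmxDr.
  rewrite -!scalemxAl -!scalemxAr Qx e1 e2 !scaler0 add0r !scalerA.
  by rewrite (mulrC s al) scalerDl !addrA.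
have E : forall c d (S Q : 'M[C]_1), (c *: S + d *: Q) 0 0 = c * S 0 0 + d * Q 0 0.
  by move=> *; rewrite !mxE.
have := pA (al *: x + s *: y); rewrite key E -/a -/s => H.
have H2 : s * s * (a + 2) <= 0.
  rewrite -oppr_ge0; apply: le_trans H _; rewrite le_eqVlt; apply/orP; left; apply/eqP.
  rewrite /al; ring.
have H3 : s * s * (a + 2) = 0.
  apply: le_anti; rewrite H2 /=; apply: mulr_ge0; first exact: mulr_ge0.
  by apply: addr_ge0.
have s00 : s = 0.
  move: H3 => /eqP; rewrite !mulf_eq0 orbb => /orP [/eqP //|].
  move=> /eqP h; have : 0 < a + 2 by apply: ltr_wpDl.
  by rewrite h ltxx.
apply/matrixP => k j; rewrite ord1 [RHS]mxE.
have := s00; rewrite /s sE => /psumr_eq0P => h.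
have hp : forall k : 'I_n, true -> 0 <= (y k 0)^* * y k 0.
  by move=> k' _; rewrite mulrC; exact: mul_conjC_ge0.
have := h hp k isT.
by move/eqP; rewrite mulrC mul_conjC_eq0 => /eqP.
Qed.

Lemma Eent n (b : 'M[C]_n) i j k l :
  (E i i *m b *m E j j) k l = ((k == i) && (l == j))%:R * b i j.
Proof.
rewrite /E mxE (bigD1 j) //= big1 => [|m mj]; last by rewrite [delta_mx j j m l]mxE (negbTE mj) andFb mulr0.
rewrite mxE (bigD1 i) //= big1 => [|m mi]; last by rewrite [delta_mx i i k m]mxE (negbTE mi) andbF mul0r.
rewrite !mxE !eqxx !andbT !addr0.
by case: (k == i); case: (l == j); rewrite /= ?mul1r ?mulr1 ?mul0r ?mulr0.
Qed.

Lemma Tmap_entry n (R : rel 'I_n) (b : 'M[C]_n) k l :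
  (Tmap R b) k l = if R k l then b k l else 0.
Proof.
rewrite /Tmap summxE (bigD1 k) //= [X in _ + X]big1 ?addr0; last first.
  move=> i ik; rewrite summxE big1 // => j _; by rewrite Eent eq_sym (negbTE ik) mul0r.
rewrite summxE; case Rkl: (R k l).
  rewrite (bigD1 l) //= big1 ?addr0; first by rewrite Eent !eqxx mul1r.
  by move=> j /andP [_ jl]; rewrite Eent eq_sym (negbTE jl) andbF mul0r.
rewrite big1 // => j Rkj; rewrite Eent eqxx /=; case: eqP => [lj|]; last by rewrite mul0r.
by rewrite -lj Rkl in Rkj.
Qed.

Lemma qformE n (A : 'M[C]_n) (x : 'cV[C]_n) :
  (adjmx x *m A *m x) 0 0 = \sum_p (x p 0)^* * \sum_q A p q * x q 0.
Proof.
rewrite -mulmxA mxE; apply: eq_bigr => p _; rewrite !mxE; congr (_ * _).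
Qed.

Lemma mulcolE n (A : 'M[C]_n) (x : 'cV[C]_n) k :
  (A *m x) k 0 = \sum_q A k q * x q 0.
Proof. by rewrite mxE. Qed.

Lemma sum1 n (F : 'I_n -> C) i : \sum_q F q * (q == i)%:R = F i.
Proof.
rewrite (bigD1 i) //= eqxx mulr1 big1 ?addr0 // => q qi; by rewrite (negbTE qi) mulr0.
Qed.

Lemma sum2 n (F : 'I_n -> C) i j a b : i != j ->
  \sum_q F q * ((q == i)%:R * a + (q == j)%:R * b) = F i * a + F j * b.
Proof.
move=> ij.
transitivity (\sum_q (F q * a) * (q == i)%:R + \sum_q (F q * b) * (q == j)%:R).
  by rewrite -big_split; apply: eq_bigr => q _ /=; ring.
by rewrite !sum1.
Qed.

Lemma conjx (a b : bool) (z w : C) :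
  (a%:R * z^* + b%:R * - w^*)^* = a%:R * z + b%:R * - w.
Proof. rewrite rmorphD !rmorphM !rmorph_nat rmorphN; congr (_ * _ + _ * - _); exact: conjCK. Qed.
End S.

Local Open Scope complex_scope.

Theorem lemma4p13 (Rl : realType) (n : nat) (R : rel 'I_n)
    (rho : 'M[Rl[i]]_n) (v : 'cV[Rl[i]]_n) :
  tolerance R -> density rho -> unit_vec v -> tolerant R v ->
  Tmap R rho = Tmap R (Pv v) -> rho = Pv v.
Proof.
move=> [Rr Rs] [psdr _] _ [_ tol] HT.
have Hent : forall k l, R k l -> rho k l = v k 0 * (v l 0)^*.
  move=> k l Rkl; have := congr1 (fun M : 'M[Rl[i]]_n => M k l) HT.
  by rewrite /= !Tmap_entry Rkl mxE.
have herm : forall k l, rho k l = (rho l k)^*.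
  by move=> k l; have [hA _] := psdr; rewrite -[in LHS]hA /adjmx !mxE.
have col0 : forall l, v l 0 = 0 -> forall k, rho k l = 0.
  move=> l vl k.
  pose e : 'cV[Rl[i]]_n := \col_p (p == l)%:R.
  have ee : forall F : 'I_n -> Rl[i], \sum_q F q * e q 0 = F l.
    by move=> F; under eq_bigr do rewrite mxE; exact: sum1.
  have := @psd_null _ _ rho e psdr.
  rewrite qformE.
  under eq_bigr => p _ do rewrite ee mulrC [e p 0]mxE rmorph_nat.
  rewrite sum1 (Hent l l (Rr l)) vl mul0r => /(_ erefl) /(congr1 (fun M : 'cV[Rl[i]]_n => M k 0)).
  by rewrite mulcolE ee mxE.
have pair : forall k i j, R i j -> rho k i * (v j 0)^* = rho k j * (v i 0)^*.
  move=> k i j Rij; case: (eqVneq i j) => [->//|ij].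
  pose x : 'cV[Rl[i]]_n := \col_p ((p == i)%:R * (v j 0)^* + (p == j)%:R * - (v i 0)^*).
  have xs : forall F : 'I_n -> Rl[i], \sum_q F q * x q 0 = F i * (v j 0)^* + F j * - (v i 0)^*.
    by move=> F; under eq_bigr do rewrite mxE; exact: sum2.
  have := @psd_null _ _ rho x psdr.
  rewrite qformE.
  under eq_bigr => p _ do rewrite xs mulrC [x p 0]mxE conjx.
  have Rji : R j i by rewrite Rs.
  rewrite sum2 // (Hent i i (Rr i)) (Hent i j Rij) (Hent j i Rji) (Hent j j (Rr j)).
  have -> : (v i 0 * (v i 0)^* * (v j 0)^* + v i 0 * (v j 0)^* * - (v i 0)^*) * v j 0 +
    (v j 0 * (v i 0)^* * (v j 0)^* + v j 0 * (v j 0)^* * - (v i 0)^*) * - v i 0 = 0 by ring.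
  move=> /(_ erefl) /(congr1 (fun M : 'cV[Rl[i]]_n => M k 0)).
  rewrite mulcolE xs mxE => h; apply/eqP; rewrite -subr_eq0 -mulrN; exact/eqP.
have chain : forall k p i, path (Rv R v) i p -> v i 0 != 0 ->
    rho k i * (v (last i p) 0)^* = rho k (last i p) * (v i 0)^*.
  move=> k; elim => [|y p IH] i //=.
  move=> /andP [] /and3P [Riy _ vy0] pth vi0.
  have h1 := pair k i y Riy. have h2 := IH y pth vy0.
  have cy0 : (v y 0)^* != 0 by rewrite conjC_eq0.
  apply: (mulIf cy0).
  rewrite -mulrA (mulrC (v (last y p) 0)^*) mulrA h1 -mulrA (mulrC (v i 0)^*) mulrA h2.
  by rewrite -!mulrA (mulrC (v y 0)^*).
apply/matrixP => k l; rewrite mxE.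
case: (eqVneq (v l 0) 0) => vl; first by rewrite col0 // vl rmorph0 mulr0.
case: (eqVneq (v k 0) 0) => vk; first by rewrite herm col0 // rmorph0 vk mul0r.
have /connectP [p pth lE] := tol k l vk vl.
have := chain k p k pth vk; rewrite -lE Hent ?Rr // => h.
have ck0 : (v k 0)^* != 0 by rewrite conjC_eq0.
apply: (mulIf ck0); rewrite -h; ring.
Qed.
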